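(* Let $[\alpha]_{K\times K}\in\mathcal A_{\mathrm{SLS}}$, let $\pi_1,\dots,\pi_n$ ($n>1$) be disjoint cycles, and let $\pi_{1,2,\dots,n}=(\pi_1\to\pi_2\to\cdots\to\pi_n)$ be their combination. Then $$\Delta_{\pi_{1,2,\dots,n}}\le\Delta_{\pi_1}+\cdots+\Delta_{\pi_n}+\Delta_\pi,\qquad\text{where }\pi=(\pi_1(1)\to\pi_2(1)\to\cdots\to\pi_n(1)).$$
   Context: SLS regime: $\mathcal A_{\mathrm{SLS}}=\{[\alpha]\in\mathbb R_+^{K\times K}:\ \alpha_{ii}\ge\max(\alpha_{ij},\alpha_{ki},\alpha_{ik}+\alpha_{ji}-\alpha_{jk})\ \forall i,j,k\in[K],\ i\notin\{j,k\}\}$. Cycles: a cycle $\pi=(i_1\to\cdots\to i_M)$, $M\ge1$, is an ordered list of distinct indices of $[K]$, read cyclically ($i_{M+1}=i_1$); $\pi(m)=i_m$, in particular $\pi(1)=i_1$ is the head; $\{\pi\}=\{i_1,\dots,i_M\}$; cycles are disjoint if their sets are disjoint. For disjoint cycles $\pi_1=(i_{1,1}\to\cdots\to i_{1,m_1}),\dots,\pi_n=(i_{n,1}\to\cdots\to i_{n,m_n})$, the combined cycle is $(\pi_1\to\cdots\to\pi_n)=(i_{1,1}\to\cdots\to i_{1,m_1}\to i_{2,1}\to\cdots\to i_{2,m_2}\to\cdots\to i_{n,m_n})$. $\delta_{ij}=\alpha_{ii}-\alpha_{ji}$ ($i\neq j$), $\delta_{ii}=0$; $\Delta_\pi=\sum_{m=1}^M\delta_{i_mi_{m+1}}$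 if $M>1$, $\Delta_\pi=\alpha_{i_1i_1}$ if $M=1$. *)

(* Defs.v *)
From HB Require Import structures.
From mathcomp Require Import all_boot all_order all_algebra.
Set Implicit Arguments. Unset Strict Implicit. Unset Printing Implicit Defensive.
Import Order.TTheory GRing.Theory Num.Theory.
Local Open Scope ring_scope.

Definition in_SLS (R : realFieldType) (K : nat) (alpha : 'I_K -> 'I_K -> R) : Prop :=
  (forall i j, 0 <= alpha i j) /\
  (forall i j k, i != j -> i != k ->
     [/\ alpha i j <= alpha i i,
         alpha k i <= alpha i i &
         alpha i k + alpha j i - alpha j k <= alpha i i]).

Definition delta (R : realFieldType) (K : nat) (alpha : 'I_K -> 'I_K -> R)
  (i j : 'I_K) : R :=
  if i == j then 0 else alpha i i - alpha j i.

(* A cycle is a nonempty duplicate-free list of indices, read cyclically. *)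
Definition is_cycle (K : nat) (p : seq 'I_K) : bool := (0 < size p)%N && uniq p.

Definition Delta (R : realFieldType) (K : nat) (alpha : 'I_K -> 'I_K -> R)
  (p : seq 'I_K) : R :=
  match p with
  | [:: i] => alpha i i
  | i :: _ =>
      \sum_(m < size p) delta alpha (nth i p m) (nth i p ((m.+1) %% size p))
  | [::] => 0
  end.

Definition pairwise_disjoint (K : nat) (ps : seq (seq 'I_K)) : Prop :=
  forall a b : nat, (a < size ps)%N -> (b < size ps)%N -> a <> b ->
    forall x : 'I_K, x \in nth [::] ps a -> x \notin nth [::] ps b.

Definition combine (K : nat) (ps : seq (seq 'I_K)) : seq 'I_K := flatten ps.

Definition heads (K : nat) (ps : seq (seq 'I_K)) : seq 'I_K :=
  flatten [seq take 1 p | p <- ps].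

(* Main.v *)
Require Import Defs.
From HB Require Import structures.
From mathcomp Require Import all_boot all_order all_algebra.
From mathcomp Require Import lra.
Import Order.TTheory GRing.Theory Num.Theory.
Local Open Scope ring_scope.

Section S.
Variables (R : realFieldType) (K : nat) (alpha : 'I_K -> 'I_K -> R).

Fixpoint psum (x : 'I_K) (s : seq 'I_K) : R :=
  if s is y :: s' then delta alpha x y + psum y s' else 0.

Definition op (L : seq 'I_K) (z : 'I_K) : R :=
  if L is x :: s then psum x (rcons s z) else 0.

Lemma psum_path d x s :
  \sum_(m < size s) delta alpha (nth d (x :: s) m) (nth d (x :: s) m.+1) = psum x s.
Proof.
elim: s x => [|y s IH] x /=; first by rewrite big_ord0.
by rewrite big_ord_recl /= IH.
Qed.

Lemma psum_cat x s1 y s2 :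
  psum x (s1 ++ y :: s2) = psum x (rcons s1 y) + psum y s2.
Proof.
elim: s1 x => [|w s1 IH] x /=; first by rewrite addr0.
by rewrite IH addrA.
Qed.

Lemma psum_rcons x s z : psum x (rcons s z) = psum x s + delta alpha (last x s) z.
Proof.
elim: s x => [|w s IH] x /=; first by rewrite addr0 add0r.
by rewrite IH addrA.
Qed.

Lemma DeltaE x y s : Delta alpha (x :: y :: s) = op (x :: y :: s) x.
Proof.
rewrite /Delta /op psum_rcons -(psum_path x x (y :: s)).
set p := x :: y :: s.
rewrite [size p]/= big_ord_recr modnn.
have -> : nth x p (size (y :: s)) = last x (y :: s).
  exact: (nth_last x (x :: y :: s)).
congr (_ + _).
apply: eq_bigr => [[m Hm]] _ /=.
by rewrite modn_small.
Qed.

Lemma termwise h t z : in_SLS alpha -> uniq (h :: t) -> z \notin h :: t ->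
  op (h :: t) z <= Delta alpha (h :: t) + delta alpha h z.
Proof.
move=> [Hpos Hsls] Hu Hz.
case: t Hu Hz => [|y t] Hu Hz.
  by rewrite /op /= addr0 lerDr.
rewrite DeltaE /op !psum_rcons /=.
set l := last y t.
have Hl : l \in y :: t by rewrite /l mem_last.
move: Hu => /= /andP [Hh _].
have hl : h != l.
  by apply/negP => /eqP E; move: Hh; rewrite E Hl.
rewrite in_cons negb_or in Hz; move/andP: Hz => [zh zt].
have zl : z != l.
  by apply/negP => /eqP E; move: zt; rewrite E Hl.
have hz : h != z by rewrite eq_sym.
rewrite /delta (negbTE hz) [l == z]eq_sym (negbTE zl) [l == h]eq_sym (negbTE hl).
generalize (if h == y then 0 else alpha h h - alpha y h) (psum y t) => A B.
have [_ _ H3] := Hsls h z l hz hl.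
lra.
Qed.

Lemma key ps z : in_SLS alpha -> all (@is_cycle K) ps -> ps != [::] ->
  (forall a, (a.+1 < size ps)%N -> forall x, x \in nth [::] ps a.+1 -> x \notin nth [::] ps a) ->
  z \notin last [::] ps ->
  op (flatten ps) z <= \sum_(p <- ps) Delta alpha p + op (heads ps) z.
Proof.
move=> Hs; elim: ps => [|c ps IH] //= /andP [Hc Hall] _ Hd Hz.
case: c Hc Hd Hz => [|h t] //= /andP [_ Hu] Hd Hz.
case: ps IH Hall Hd Hz => [|c' ps] IH Hall Hd Hz.
  move: (termwise _ _ _ Hs Hu Hz).
  rewrite /op /heads /= take0 cats0 big_cons big_nil addr0 /= addr0.
  by [].
move: Hall => /= /andP [Hc' Hall'].
case: c' Hc' Hd Hz IH => [|h' t'] //= Hc' Hd Hz IH.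
have IH' := IH _ isT _ Hz; rewrite /= Hc' Hall' in IH'.
have {IH'} IH' := IH' isT (fun a Ha => Hd a.+1 Ha).
have Hh' : h' \notin h :: t by apply: (Hd 0%N) => //; rewrite inE eqxx.
have T := termwise _ _ _ Hs Hu Hh'.
rewrite big_cons.
move: T IH'.
rewrite !take0.
set D1 := Delta alpha (h :: t).
set S := \sum_(j <- _) Delta alpha j.
move=> T H1.
rewrite rcons_cat psum_cat.
move: T H1 => /=.
set X := psum h' _.
set Y := psum h' _.
move=> T H1.
clearbody D1 S X Y.
lra.
Qed.
End S.

Theorem lemma6 (R : realFieldType) (K : nat) (alpha : 'I_K -> 'I_K -> R)
  (ps : seq (seq 'I_K)) :
  in_SLS alpha ->
  (1 < size ps)%N ->
  all (@is_cycle K) ps ->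
  pairwise_disjoint ps ->
  Delta alpha (combine ps) <=
    \sum_(p <- ps) Delta alpha p + Delta alpha (heads ps).
Proof.
move=> Hs Hn Hall Hd.
case: ps Hn Hall Hd => [|c [|c' ps]] // _ Hall Hd.
move: (Hall) => /= /andP [Hc /andP [Hc' _]].
case: c Hc Hall Hd => [|h t] // _ Hall Hd.
case: c' Hc' Hall Hd => [|h' t'] // _ Hall Hd.
have Hz : h \notin last [::] [:: h :: t, h' :: t' & ps].
  rewrite (last_nth [::]).
  change (h \notin nth [::] [:: h :: t, h' :: t' & ps] (size ps).+1).
  apply: (Hd 0%N (size ps).+1) => //.
  by rewrite inE eqxx.
have K1 := @key R K alpha _ h Hs Hall isT
  (fun a Ha x Hx => Hd a.+1 a Ha (ltnW Ha) (fun E => n_Sn a (esym E)) x Hx) Hz.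
rewrite /combine.
have EH : heads [:: h :: t, h' :: t' & ps] = h :: h' :: heads ps.
  by rewrite /heads /= !take0.
rewrite EH in K1 *; rewrite DeltaE.
clear EH; case: t Hall Hd Hz K1 => [|y t] Hall Hd Hz K1.
  all: rewrite !cat_cons DeltaE; exact: K1.
Qed.
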